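(* Let $b,c,t$ be positive integers, $n=tb$, and let $\mathbf{H}^{*}_{qc}$ be a $cb\times tb$ binary matrix which is a $c\times t$ array of $b\times b$ circulant matrices over $\mathbb{F}_2$, of rank $r$ over $\mathbb{F}_2$. Let $\mathcal{C}\subseteq\mathbb{F}_2^n$ be the code with parity-check matrix $\mathbf{H}^{*}_{qc}$ and $\Lambda=\mathcal{C}+2\mathbb{Z}^n=\{\mathbf{x}\in\mathbb{Z}^n:\mathbf{x}\bmod 2\in\mathcal{C}\}$. Suppose $l$ with $c\le l\le t$ is the least number of columns of circulants of $\mathbf{H}^{*}_{qc}$ forming a submatrix of rank $r$, and that the last $l$ columns of circulants of $\mathbf{H}^{*}_{qc}$ form such a $cb\times lb$ submatrix $\mathbf{D}^{*}$. Suppose $d_1,\dots,d_l\in\{0,\dots,b\}$, with $\bar d_j=b-d_j$, are such that the columns of $\mathbf{D}^{*}$ consisting, for each $j=1,\dots,l$, of the last $\bar d_j$ columns of the $j$-th column block (of width $b$) of $\mathbf{D}^{*}$ are linearly independent over $\mathbb{F}_2$ and number exactly $r$ (so $\sum_j\bar d_j=r$ and $\sum_j d_j=lb-r$). For each $i$ with $d_i\ge1$, let $\mathbf{w}_i=(\mathbf{w}_i^{(1)},\dots,\mathbf{w}_i^{(l)})\in\mathbb{F}_2^{lb}$, $\mathbf{w}_i^{(j)}\in\mathbb{F}_2^b$, be the vector with $\mathbf{D}^{*}\mathbf{w}_i^t=\mathbf{0}$ over $\mathbb{F}_2$ such that the first $d_j$ entries of $\mathbf{w}_i^{(j)}$ are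 $(1,0,\dots,0)$ if $j=i$ and all $0$ if $j\ne i$. Let $\sigma$ denote the cyclic right shift by one position on $\mathbb{F}_2^b$. Let $\mathbf{Q}$ be the $(lb-r)\times tb$ binary matrix whose rows are, for each $i=1,\dots,l$ and $s=0,\dots,d_i-1$, the vectors $(\mathbf{0}_{(t-l)b},\sigma^s(\mathbf{w}_i^{(1)}),\dots,\sigma^s(\mathbf{w}_i^{(l)}))$. Let $\mathbf{G}$ be a $(t-l)b\times tb$ binary matrix of the form $[\mathbf{I}_{(t-l)b}\ |\ \mathbf{G}']$ with $\mathbf{G}'$ a $(t-l)\times l$ array of $b\times b$ circulants, and assume that $\mathbf{G}^{*}_{qc}=\begin{bmatrix}\mathbf{G}\\ \mathbf{Q}\end{bmatrix}$ is a generator matrix of $\mathcal{C}$ (its $tb-r$ rows form a basis of $\mathcal{C}$). Let $\mathbf{R}$ be the $r\times tb$ integer matrix $[\mathbf{0}_{r\times(t-l)b}\ |\ \mathbf{B}]$ where $\mathbf{B}$ is block diagonal with $l$ diagonal blocks, the $j$-th being the $\bar d_j\times b$ matrix $[\mathbf{0}_{\bar d_j\times d_j}\ \ 2\mathbf{I}_{\bar d_j}]$. Then the $n\times n$ integer matrix $$\mathbf{G}_{\Lambda}=\begin{bmatrix}\mathbf{G}^{*}_{qc}\\ \mathbf{R}\end{bmatrix}$$ (entries of $\mathbf{G}^{*}_{qc}$ regarded as integers $0,1$) is a generator matrix of $\Lambda$, i.e., its rows form a $\mathbb{Z}$-basis of $\Lambda$.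
   Context: Codewords of a binary code are embedded in $\mathbb{Z}^n$ with entries $0,1$. $\Lambda=\mathcal{C}+2\mathbb{Z}^n$ is the Construction A lattice of $\mathcal{C}$ (a QC-LDPC lattice when $\mathcal{C}$ is a quasi-cyclic LDPC code). A generator matrix of a full-rank lattice is a square matrix whose rows form a $\mathbb{Z}$-basis of the lattice. *)

(* Defs.v *)
From HB Require Import structures.
From mathcomp Require Import all_boot all_order all_algebra.
Set Implicit Arguments. Unset Strict Implicit. Unset Printing Implicit Defensive.
Import Order.TTheory GRing.Theory Num.Theory.
Local Open Scope ring_scope.

Definition ent (R : nmodType) (m n : nat) (A : 'M[R]_(m, n)) (i j : nat) : R :=
  match insub i, insub j with
  | Some i', Some j' => A i' j'
  | _, _ => 0
  end.

(* index k, in block k %/ b, shifted cyclically by one inside its block *)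
Definition bshift (b k : nat) : nat := (k %/ b * b + (k %% b).+1 %% b)%N.

(* A is an array of b x b circulant blocks (quasi-cyclic) *)
Definition block_circulant (R : nmodType) (b m n : nat) (A : 'M[R]_(m, n)) : Prop :=
  forall i j : nat, (i < m)%N -> (j < n)%N ->
    ent A i j = ent A (bshift b i) (bshift b j).

Definition code (m n : nat) (H : 'M['F_2]_(m, n)) (x : 'rV['F_2]_n) : Prop :=
  H *m x^T = 0.

Definition mod2 (z : int) : 'F_2 := z%:~R.

Definition constrA (m n : nat) (H : 'M['F_2]_(m, n)) (x : 'rV[int]_n) : Prop :=
  code H (map_mx mod2 x).

Definition lift01 (x : 'F_2) : int := (val x)%:Z.

Definition rows_basis (R : pzRingType) (m N : nat) (A : 'M[R]_(m, N))
  (P : 'rV[R]_N -> Prop) : Prop :=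
  [/\ forall i, P (row i A),
      forall x, P x -> exists z : 'rV[R]_m, x = z *m A
    & forall z : 'rV[R]_m, z *m A = 0 -> z = 0].

Definition lattice_generator (m N : nat) (A : 'M[int]_(m, N))
  (L : 'rV[int]_N -> Prop) : Prop := m = N /\ rows_basis A L.

(* H with all columns outside the column blocks in S zeroed out; its rank is
   the rank of the submatrix of the column blocks in S *)
Definition colblocks (m t b : nat) (H : 'M['F_2]_(m, t * b)) (S : {set 'I_t}) :=
  H *m diag_mx (\row_(j < t * b) ([exists k in S, nat_of_ord k == (j %/ b)%N])%:R).

Definition lastblocks (m t b l : nat) (H : 'M['F_2]_(m, t * b)) : 'M['F_2]_(m, l * b) :=
  \matrix_(i < m, j < l * b) ent H i ((t - l) * b + j).

(* D with all columns except those selected by d zeroed out: in block j the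
   last b - d j columns are selected *)
Definition selcols (m l b : nat) (d : nat -> nat) (D : 'M['F_2]_(m, l * b)) :=
  D *m diag_mx (\row_(j < l * b) (d (j %/ b) <= j %% b)%N%:R).

(* the rows (0, sigma^s w^(1), ..., sigma^s w^(l)), s < d i, sigma = cyclic right shift *)
Definition Qblock (t l b di : nat) (wi : 'rV['F_2]_(l * b)) : 'M['F_2]_(di, t * b) :=
  \matrix_(s < di, col < t * b)
    if (col < (t - l) * b)%N then 0
    else let j' := (col - (t - l) * b)%N in
         ent wi 0 ((j' %/ b) * b + ((j' %% b + b - s %% b) %% b)).

Definition Qmat (t l b : nat) (d : nat -> nat) (w : nat -> 'rV['F_2]_(l * b)) :=
  \mxcol_(i < l) Qblock t (d i) (w i).

(* rows [0_{dbar_j x d_j} 2 I_{dbar_j}] placed at column block (t-l)+j *)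
Definition Rblock (t l b dj j : nat) : 'M[int]_(b - dj, t * b) :=
  \matrix_(k < b - dj, col < t * b)
    if nat_of_ord col == ((t - l) * b + j * b + dj + k)%N then 2 else 0.

Definition Rmat (t l b : nat) (d : nat -> nat) :=
  \mxcol_(j < l) Rblock t l b (d j) j.

(* Main.v *)
Require Import Defs.
From HB Require Import structures.
From mathcomp Require Import all_boot all_order all_algebra.
From mathcomp Require Import zify.
Set Implicit Arguments. Unset Strict Implicit. Unset Printing Implicit Defensive.
Import Order.TTheory GRing.Theory Num.Theory.
Local Open Scope ring_scope.
Lemma tri_indep (R : idomainType) m n (A : 'M[R]_(m, n)) (piv : 'I_m -> 'I_n)
  (ord : 'I_m -> nat) :
  (forall p, A p (piv p) != 0) ->
  (forall p q, p != q -> A p (piv q) != 0 -> (ord p < ord q)%N) ->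
  forall z : 'rV_m, (forall q, (z *m A) 0 (piv q) = 0) -> z = 0.
Proof.
move=> Hd Ht z Hz.
suff H : forall N q, (ord q < N)%N -> z 0 q = 0.
  by apply/rowP => q; rewrite mxE (H (ord q).+1).
elim=> [//|N IH] q Hq.
have := Hz q; rewrite mxE (bigD1 q) //= big1 ?addr0.
  by move/eqP; rewrite mulf_eq0 (negbTE (Hd q)) orbF => /eqP.
move=> p Hpq; have [Ap0|Apn] := eqVneq (A p (piv q)) 0; first by rewrite Ap0 mulr0.
by rewrite IH ?mul0r // (leq_trans (Ht _ _ Hpq Apn)).
Qed.

Lemma tri_solve (R : pzRingType) m n (A : 'M[R]_(m, n)) (piv : 'I_m -> 'I_n)
  (ord : 'I_m -> nat) :
  (forall p, A p (piv p) = 1) ->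
  (forall p q, p != q -> A p (piv q) != 0 -> (ord p < ord q)%N) ->
  forall x : 'rV_n, exists z : 'rV_m, forall q, (z *m A) 0 (piv q) = x 0 (piv q).
Proof.
move=> Hd Ht x.
suff H : forall N, exists z : 'rV_m, forall q, (ord q < N)%N -> (z *m A) 0 (piv q) = x 0 (piv q).
  have [z Hz] := H (\max_q ord q).+1; exists z => q; apply: Hz.
  by rewrite ltnS leq_bigmax.
elim=> [|N [z Hz]]; first by exists 0.
exists (z + \row_p (if ord p == N then (x - z *m A) 0 (piv p) else 0)) => q Hq.
rewrite mulmxDl mxE.
have E : (\row_p (if ord p == N then (x - z *m A) 0 (piv p) else 0) *m A) 0 (piv q)
   = if ord q == N then (x - z *m A) 0 (piv q) else 0.
  rewrite mxE (bigD1 q) //= big1 ?addr0.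
    by rewrite mxE Hd mulr1.
  move=> p Hpq; rewrite mxE.
  case: eqP => Ep; last by rewrite mul0r.
  have [Ap0|Apn] := eqVneq (A p (piv q)) 0; first by rewrite Ap0 mulr0.
  have := Ht _ _ Hpq Apn; rewrite Ep => HN.
  by exfalso; move: Hq; rewrite ltnS leqNgt HN.
rewrite E; case: eqP => Eq.
  by rewrite !mxE addrC subrK.
by rewrite addr0 Hz // ltn_neqAle -ltnS Hq andbT; apply/eqP.
Qed.
Lemma mod2_lift (a : 'F_2) : mod2 (lift01 a) = a.
Proof. by case: a => [[|[|]]] //= Ha; apply/val_inj. Qed.

Lemma lift01_eq0 (a : 'F_2) : (lift01 a == 0) = (a == 0).
Proof. by case: a => [[|[|]]] //= Ha. Qed.

Lemma lift01_1 : lift01 1 = 1.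
Proof. by []. Qed.

Lemma mod2_eq0 (z : int) : mod2 z = 0 -> (2 %| z)%Z.
Proof.
have ch := pchar_Fp (isT : prime 2).
rewrite dvdzE /mod2; case: z => n /=.
  by move/eqP; rewrite -(dvdn_pcharf ch).
rewrite NegzE mulrNz => /eqP; rewrite oppr_eq0 -(dvdn_pcharf ch) //.
Qed.

Lemma map_mod2_mul m k n (z : 'M[int]_(m, k)) (M : 'M['F_2]_(k, n)) :
  map_mx mod2 (z *m map_mx lift01 M) = map_mx mod2 z *m M.
Proof.
have -> : map_mx mod2 = map_mx (intr : int -> 'F_2) by [].
rewrite (map_mxM (intr : {rmorphism int -> 'F_2})); congr (_ *m _).
by apply/matrixP => i j; rewrite !mxE; apply: mod2_lift.
Qed.

Lemma code_mul m n k (H : 'M['F_2]_(m, n)) (M : 'M['F_2]_(k, n)) (z : 'rV_k) :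
  (forall i, code H (row i M)) -> code H (z *m M).
Proof.
move=> Hr; rewrite /code trmx_mul mulmxA.
suff -> : H *m M^T = 0 by rewrite mul0mx.
apply/matrixP => a i; have := congr1 (fun X : 'M['F_2]_(m,1) => X a 0) (Hr i : H *m (row i M)^T = 0).
rewrite /= !mxE => E; apply: etrans E; apply: eq_bigr => j _; rewrite !mxE.
done.
Qed.
Definition s1 n (p_ : 'I_n -> nat) (q : 'I_(\sum_i p_ i)) : nat :=
  @tagnat.sig1 n p_ q.
Definition s2 n (p_ : 'I_n -> nat) (q : 'I_(\sum_i p_ i)) : nat :=
  @tagnat.sig2 n p_ q.

Lemma s1_lt n (p_ : 'I_n -> nat) (q : 'I_(\sum_i p_ i)) : (s1 q < n)%N.
Proof. exact: ltn_ord. Qed.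

Lemma s2_lt n (p_ : 'I_n -> nat) (q : 'I_(\sum_i p_ i)) :
  (s2 q < p_ (tagnat.sig1 q))%N.
Proof. exact: ltn_ord. Qed.

Lemma s1_Rank n (p_ : 'I_n -> nat) i0 (k : 'I_(p_ i0)) :
  s1 (tagnat.Rank i0 k) = i0.
Proof. by rewrite /s1 tagnat.Rank1K. Qed.

Lemma s2_Rank n (p_ : 'I_n -> nat) i0 (k : 'I_(p_ i0)) :
  s2 (tagnat.Rank i0 k) = k.
Proof. by rewrite /s2 tagnat.Rank2K. Qed.

Lemma s_inj n (p_ : 'I_n -> nat) (q q' : 'I_(\sum_i p_ i)) :
  s1 q = s1 q' -> s2 q = s2 q' -> q = q'.
Proof.
move=> E1 E2; rewrite -(tagnat.sig2K q) -(tagnat.sig2K q').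
apply: val_inj; apply/eqP; rewrite tagnat.eq_Rank; apply/andP; split; apply/eqP => //.
exact: val_inj.
Qed.

Lemma QmatE t l b (d : nat -> nat) (w : nat -> 'rV['F_2]_(l * b))
  (q : 'I_(\sum_(i < l) d i)) (c : 'I_(t * b)) :
  Qmat t d w q c = if (c < (t - l) * b)%N then 0 else
    ent (w (s1 q)) 0 (((c - (t - l) * b) %/ b) * b +
       ((c - (t - l) * b) %% b + b - s2 q %% b) %% b).
Proof. by rewrite /Qmat !mxE. Qed.

Lemma RmatE t l b (d : nat -> nat) (q : 'I_(\sum_(j < l) (b - d j))) (c : 'I_(t * b)) :
  Rmat t l b d q c = if nat_of_ord c == ((t - l) * b + s1 q * b + d (s1 q) + s2 q)%N
    then 2 else 0.
Proof. by rewrite /Rmat !mxE. Qed.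
Lemma divmod_uniq (b i s j k : nat) : (s < b)%N -> (k < b)%N ->
  (i * b + s = j * b + k)%N -> i = j /\ s = k.
Proof.
move=> sb kb E; have b0 : (0 < b)%N by apply: leq_ltn_trans sb.
have E1 := congr1 (fun x => x %/ b)%N E; have E2 := congr1 (fun x => x %% b)%N E.
move: E1 E2 => /=; rewrite !divnMDl // !modnMDl !divn_small // !modn_small //.
by rewrite !addn0 => -> ->.
Qed.

Lemma divmodE (b j k : nat) : (k < b)%N -> ((j * b + k) %/ b = j /\ (j * b + k) %% b = k)%N.
Proof.
move=> kb; have b0 : (0 < b)%N by apply: leq_ltn_trans kb.
by rewrite divnMDl // modnMDl divn_small // modn_small // addn0.
Qed.

Lemma entE (R : nmodType) m n (A : 'M[R]_(m, n)) (i : 'I_m) (j : 'I_n) :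
  ent A i j = A i j.
Proof. by rewrite /ent !valK. Qed.

Lemma splitL m n (i : 'I_m) : split (lshift n i) = inl i.
Proof. exact: (unsplitK (inl i)). Qed.
Lemma splitR m n (i : 'I_n) : split (rshift m i) = inr i.
Proof. exact: (unsplitK (inr i)). Qed.


Lemma subE (R : zmodType) n (u v : 'rV[R]_n) c : (u - v) 0 c = u 0 c - v 0 c.
Proof. by rewrite !mxE. Qed.

Lemma addE (R : zmodType) n (u v : 'rV[R]_n) c : (u + v) 0 c = u 0 c + v 0 c.
Proof. by rewrite !mxE. Qed.

Lemma map_mod2B n (u v : 'rV[int]_n) :
  map_mx mod2 (u - v) = map_mx mod2 u - map_mx mod2 v.
Proof. by apply/rowP => j; rewrite !mxE /mod2 mulrzBr. Qed.

Lemma ord_lt (b x y l i j : nat) : (y < x)%N -> (x < b)%N -> (i < l)%N ->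
  (1 + (b - x) * l + i < 1 + (b - y) * l + j)%N.
Proof.
move=> yx xb il; have uv : ((b - x).+1 <= b - y)%N by lia.
have := leq_mul uv (leqnn l); lia.
Qed.

Theorem theorem1 (b c t r l : nat) (H : 'M['F_2]_(c * b, t * b))
  (d : nat -> nat) (w : nat -> 'rV['F_2]_(l * b))
  (G : 'M['F_2]_((t - l) * b, t * b)) :
  (0 < b)%N -> (0 < c)%N -> (0 < t)%N ->
  block_circulant b H ->
  \rank H = r ->
  (c <= l)%N -> (l <= t)%N ->
  (forall S : {set 'I_t}, \rank (colblocks H S) = r -> (l <= #|S|)%N) ->
  \rank (lastblocks l H) = r ->
  (forall j, (j < l)%N -> (d j <= b)%N) ->
  (\sum_(j < l) (b - d j))%N = r ->
  \rank (selcols d (lastblocks l H)) = r ->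
  (forall i, (i < l)%N -> (1 <= d i)%N ->
     lastblocks l H *m (w i)^T = 0 /\
     (forall j k, (j < l)%N -> (k < d j)%N ->
        ent (w i) 0 (j * b + k) = ((j == i) && (k == 0%N))%:R)) ->
  (forall i j, (i < (t - l) * b)%N -> (j < (t - l) * b)%N ->
     ent G i j = (i == j)%:R) ->
  block_circulant b G ->
  rows_basis (col_mx G (Qmat t d w)) (code H) ->
  lattice_generator
    (col_mx (map_mx lift01 (col_mx G (Qmat t d w))) (Rmat t l b d))
    (constrA H).
Proof.
move=> b0 _ _ _ _ _ lt _ _ dle _ _ Hw Gid _ [GQrows GQspan _].
set K1 := ((t - l) * b)%N.
have K1e : (K1 + l * b = t * b)%N by rewrite /K1 -mulnDl subnK.
set GQ := col_mx G (Qmat t d w).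
set Rm := Rmat t l b d.
set A1 := map_mx lift01 GQ.
have s2lt : forall q : 'I_(\sum_(i < l) d i), (s2 q < d (s1 q))%N.
  by move=> q; apply: s2_lt.
have s2ltR : forall q : 'I_(\sum_(j < l) (b - d j)), (s2 q < b - d (s1 q))%N.
  by move=> q; apply: s2_lt.
pose pivn (p : 'I_(K1 + \sum_(i < l) d i)) : nat :=
  match split p with inl i => nat_of_ord i | inr q => (K1 + s1 q * b + s2 q)%N end.
have pivlt : forall p, (pivn p < t * b)%N.
  move=> p; rewrite /pivn; case: split_ordP => [i _|q _].
    by have := ltn_ord i; rewrite -K1e; lia.
  have := s1_lt q; have := s2lt q; have := dle (s1 q) (s1_lt q).
  rewrite -K1e /= => *. nia.
pose piv p := Ordinal (pivlt p).
pose ordn (p : 'I_(K1 + \sum_(i < l) d i)) : nat :=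
  match split p with inl _ => 0%N | inr q => (1 + (b - s2 q) * l + s1 q)%N end.
have Gid' : forall (i : 'I_K1) (j : 'I_(t * b)), (j < K1)%N -> G i j = (i == j :> nat)%:R.
  by move=> i j jK; rewrite -entE; apply: Gid.
have sb : forall q : 'I_(\sum_(i < l) d i), (s2 q < b)%N.
  by move=> q; apply: leq_trans (s2lt q) (dle _ (s1_lt q)).
have pivL : forall i, nat_of_ord (piv (lshift _ i)) = nat_of_ord i.
  by move=> i; rewrite /= /pivn splitL.
have pivR' : forall q, nat_of_ord (piv (rshift K1 q)) = (K1 + s1 q * b + s2 q)%N.
  by move=> q; rewrite /= /pivn splitR.
have ordL : forall i, ordn (lshift _ i) = 0%N.
  by move=> i; rewrite /ordn splitL.
have ordR : forall q, ordn (rshift K1 q) = (1 + (b - s2 q) * l + s1 q)%N.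
  by move=> q; rewrite /ordn splitR.
have QE : forall q (c : 'I_(t * b)) j k, nat_of_ord c = (K1 + j * b + k)%N -> (k < b)%N ->
   Qmat t d w q c = ent (w (s1 q)) 0 (j * b + (k + b - s2 q %% b) %% b).
  move=> q cc j k E kb; rewrite QmatE E -/K1 -addnA ltnNge leq_addr /=.
  have -> : (K1 + (j * b + k) - K1 = j * b + k)%N by lia.
  by have [-> ->] := divmodE j kb.
have GQd : forall p, GQ p (piv p) = 1.
  move=> p; rewrite /GQ; case: (split_ordP p) => [i ->|q ->].
    by rewrite col_mxEu Gid' pivL ?eqxx //.
  rewrite col_mxEd (QE q _ (s1 q) (s2 q)) ?pivR' // (modn_small (sb q)) addKn modnn addn0.
  have d0 : (0 < d (s1 q))%N by apply: leq_ltn_trans (s2lt q).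
  have := (Hw (s1 q) (s1_lt q) d0).2 (s1 q) 0%N (s1_lt q) d0.
  by rewrite addn0 !eqxx.
have GQt : forall p q, p != q -> GQ p (piv q) != 0 -> (ordn p < ordn q)%N.
  move=> p q; rewrite /GQ.
  case: (split_ordP p) => [i ->|q0 ->]; case: (split_ordP q) => [i' ->|q1 ->].
  - rewrite eq_lshift => ne; rewrite col_mxEu Gid' ?pivL ?ltn_ord //.
    by rewrite val_eqE (negbTE ne).
  - by rewrite ordL ordR.
  - by rewrite col_mxEd QmatE -/K1 pivL ltn_ord eqxx.
  rewrite eq_rshift => ne; rewrite col_mxEd (QE q0 _ (s1 q1) (s2 q1)) ?pivR' //.
  rewrite ordR ordR (modn_small (sb q0)).
  have d0 : (0 < d (s1 q0))%N by apply: leq_ltn_trans (s2lt q0).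
  have := sb q0; have := sb q1; have := s1_lt q0; have := s1_lt q1.
  case: (leqP (s2 q0) (s2 q1)) => hk; last first.
    by move=> h1 h2 h3 h4 _; apply: ord_lt.
  rewrite -addnBAC // modnDr modn_small; last by apply: leq_ltn_trans (leq_subr _ _) (sb q1).
  rewrite (Hw (s1 q0) (s1_lt q0) d0).2 ?s1_lt //; last first.
    by apply: leq_ltn_trans (leq_subr _ _) (s2lt q1).
  move=> _ _ _ _; case: (s1 q1 =P s1 q0) => //= E1; case: (_ =P 0%N) => //= E2 _.
  exfalso; move/eqP: ne; apply; apply: s_inj => //.
  by apply/eqP; rewrite eqn_leq hk -subn_eq0 E2.
pose pivRn (q : 'I_(\sum_(j < l) (b - d j))) : nat :=
  (K1 + s1 q * b + d (s1 q) + s2 q)%N.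
have pivRlt : forall q, (pivRn q < t * b)%N.
  move=> q; rewrite /pivRn.
  have := s1_lt q; have := s2ltR q; have := dle (s1 q) (s1_lt q).
  rewrite -K1e /= => *. nia.
pose pivR q := Ordinal (pivRlt q).
have RmE : forall q c, Rm q c = if c == pivR q then 2 else 0.
  by move=> q cc; rewrite /Rm RmatE.
have dRb : forall q : 'I_(\sum_(j < l) (b - d j)), (d (s1 q) + s2 q < b)%N.
  by move=> q; have := s2ltR q; have := dle _ (s1_lt q); lia.
have hRinj : forall q q', pivR q = pivR q' -> q = q'.
  move=> q q' /(congr1 val); rewrite /= /pivRn => E.
  have E' : (s1 q * b + (d (s1 q) + s2 q) = s1 q' * b + (d (s1 q') + s2 q'))%N by lia.
  have [E1 E2] := divmod_uniq (dRb q) (dRb q') E'.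
  by apply: s_inj => //; move: E2; rewrite E1 => /addnI.
have hdisj : forall p q, piv p != pivR q.
  move=> p q; apply/eqP => /(congr1 val); rewrite /= /pivn /pivRn.
  case: split_ordP => [i _|q0 _]; first by have := ltn_ord i; lia.
  move=> E.
  have E' : (s1 q0 * b + s2 q0 = s1 q * b + (d (s1 q) + s2 q))%N by lia.
  have [E1 E2] := divmod_uniq (sb q0) (dRb q) E'.
  by have := s2lt q0; rewrite E1; lia.
have hcover : forall c, (exists p, c = piv p) \/ (exists q, c = pivR q).
  move=> cc; case: (ltnP cc K1) => cK.
    by left; exists (lshift _ (Ordinal cK)); apply: val_inj; rewrite /= /pivn splitL.
  set x := (cc - K1)%N.
  have xl : (x < l * b)%N by have := ltn_ord cc; rewrite /x; lia.
  have jl : (x %/ b < l)%N by rewrite ltn_divLR.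
  have kb : (x %% b < b)%N := ltn_pmod x b0.
  have cE : nat_of_ord cc = (K1 + x %/ b * b + x %% b)%N.
    by rewrite -addnA -divn_eq /x subnKC.
  case: (ltnP (x %% b)%N (d (x %/ b)%N)) => kd.
    left; exists (rshift K1 (@tagnat.Rank l (fun i : 'I_l => d i) (Ordinal jl) (Ordinal kd))).
    by apply: val_inj; rewrite /= /pivn splitR s1_Rank s2_Rank.
  have kk : (x %% b - d (x %/ b) < b - d (x %/ b))%N by lia.
  right; exists (@tagnat.Rank l (fun j : 'I_l => (b - d j)%N) (Ordinal jl) (Ordinal kk)).
  by apply: val_inj; rewrite /= /pivRn s1_Rank s2_Rank /=; lia.
have A1d : forall p, A1 p (piv p) = 1 by move=> p; rewrite mxE GQd.
have A1t : forall p q, p != q -> A1 p (piv q) != 0 -> (ordn p < ordn q)%N.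
  by move=> p q ne; rewrite mxE lift01_eq0; apply: GQt.
have Rpiv0 : forall p q, Rm q (piv p) = 0.
  by move=> p q; rewrite RmE (negbTE (hdisj p q)).
have Hs : (\sum_(i < l) d i + \sum_(j < l) (b - d j) = l * b)%N.
  rewrite -big_split (eq_bigr (fun=> b)); last by move=> i _; change (d i + (b - d i) = b)%N; rewrite subnKC // dle.
  by rewrite sum_nat_const card_ord.
split; first by rewrite -addnA Hs.
split.
- move=> i; case: (split_ordP i) => [p ->|q ->].
    rewrite rowKu /constrA.
    have -> : map_mx mod2 (row p A1) = row p GQ.
      by apply/rowP => j; rewrite !mxE mod2_lift.
    exact: GQrows.
  rewrite rowKd /constrA.
  have -> : map_mx mod2 (row q Rm) = 0.
    by apply/rowP => j; rewrite [LHS]mxE [X in mod2 X]mxE RmE mxE; case: eqP => _ //; apply/val_inj.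
  by rewrite /code trmx0 mulmx0.
- move=> x Hx.
  have [z1 Hz1] := tri_solve A1d A1t x.
  set x' := x - z1 *m A1.
  have x'0 : forall p, x' 0 (piv p) = 0 by move=> p; rewrite /x' subE Hz1 subrr.
  have cx' : code H (map_mx mod2 x').
    rewrite /x' map_mod2B map_mod2_mul /code raddfB /= mulmxBr.
    by rewrite (code_mul _ GQrows) subr0.
  have [z' Ez'] := GQspan _ cx'.
  have z'0 : z' = 0.
    apply: (tri_indep (A:=GQ) (piv:=piv) (ord:=ordn)) => //.
      by move=> p; rewrite GQd oner_neq0.
    by move=> q; rewrite -Ez' mxE x'0.
  have ev : forall cc : 'I_(t * b), x' 0 cc \in dvdz 2.
    move=> cc; apply: mod2_eq0.
    have := congr1 (fun X : 'rV['F_2]_(t * b) => X 0 cc) Ez'.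
    by rewrite /= z'0 mul0mx mxE => ->; rewrite mxE.
  pose y := \row_q divz (x' 0 (pivR q)) 2.
  have x'E : x' = y *m Rm.
    apply/rowP => cc; rewrite [RHS]mxE; case: (hcover cc) => [[p ->]|[q0 ->]].
      by rewrite x'0 big1 // => q _; rewrite Rpiv0 mulr0.
    rewrite (bigD1 q0) //= [X in _ + X]big1 ?addr0.
      by rewrite RmE eqxx [y _ _]mxE divzK ?ev.
    move=> q ne; rewrite RmE; case: eqP => [/hRinj E|]; last by rewrite mulr0.
    by rewrite E eqxx in ne.
  by exists (row_mx z1 y); rewrite mul_row_col -x'E /x' addrC subrK.
- move=> z Hz; rewrite -(hsubmxK z) in Hz *; move: Hz; rewrite mul_row_col.
  set z1 := lsubmx z; set z2 := rsubmx z => Hz.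
  have z10 : z1 = 0.
    apply: (tri_indep (A:=A1) (piv:=piv) (ord:=ordn)) => //.
      by move=> p; rewrite A1d oner_neq0.
    move=> q; have := congr1 (fun X : 'rV[int]_(t * b) => X 0 (piv q)) Hz.
    rewrite /= addE [(z2 *m Rm) 0 _]mxE [X in _ + X]big1 ?addr0; first by move=> ->; rewrite mxE.
    by move=> q' _; rewrite Rpiv0 mulr0.
  have z20 : z2 = 0.
    rewrite z10 mul0mx add0r in Hz.
    apply: (tri_indep (A:=Rm) (piv:=pivR) (ord:=fun _ => 0%N)) => //.
    - by move=> q; rewrite RmE eqxx.
    - move=> p q ne; rewrite RmE; case: (pivR q =P pivR p) => [E|]; last by move=> _; rewrite eqxx.
      by move: E => /hRinj E; rewrite E eqxx in ne.
    - by move=> q; rewrite Hz mxE.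
  by rewrite z10 z20 row_mx0.
Qed.
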